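(* For every finite chain ring $R$ and every $k\ge1$, the linear simplex code $\mathcal{S}_k^\alpha$ is not optimal with respect to the Griesmer bound, i.e., its length $n$ satisfies $n>\sum_{i=0}^{k(\mathcal{S}_k^\alpha)-1}\left\lceil\frac{d_H(\mathcal{S}_k^\alpha)}{q^i}\right\rceil$.
   Context: Let $R$ be a finite commutative chain ring with maximal ideal $\langle\gamma\rangle$, nilpotency index $s$ and residue field $R/\langle\gamma\rangle\cong\mathbb{F}_q$. Fix coset representatives $T=\{e_0,\dots,e_{q-1}\}$ with $e_0=0,e_1=1$, ordered $e_0<\dots<e_{q-1}$; each $r\in R$ is uniquely $\sum_{i=0}^{s-1}r_i\gamma^i$, $r_i\in T$; order $R$ by $x>y$ iff $x_i>y_i$ in $T$ for the largest $i$ with $x_i\neq y_i$; list $R=\{\rho_0,\dots,\rho_{q^s-1}\}$ increasingly. $\mathbf{a}^{(m)}$ is the constant vector of length $m$. Define $G_1^\alpha=(\rho_0\ \cdots\ \rho_{q^s-1})$ and, for $k>1$, $G_k^\alpha$ as the $k\times q^{sk}$ matrix of $q^s$ column blocks, the $j$-th having first row $\boldsymbol{\rho_j}^{(q^{s(k-1)})}$ and $G_{k-1}^\alpha$ below. $\mathcal{S}_k^\alpha$ is the $R$-submodule of $R^{q^{sk}}$ generated by the rows of $G_k^\alpha$. For a linear code $\mathcal{C}\subseteq R^n$, $d_H(\mathcal{C})$ is its minimum Hamming distance and $k(\mathcal{C})$ is the minimum rank of a free $R$-submodule $\mathcal{C}'\subseteq R^n$ with $\mathcal{C}\subseteq\mathcal{C}'$.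 The Griesmer bound states $n\ge\sum_{i=0}^{k(\mathcal{C})-1}\lceil d_H(\mathcal{C})/q^i\rceil$; a code is optimal with respect to it when equality holds. *)

(* Defs.v *)
From HB Require Import structures.
From mathcomp Require Import all_boot all_order all_algebra.
Set Implicit Arguments. Unset Strict Implicit. Unset Printing Implicit Defensive.
Import GRing.Theory.
Local Open Scope ring_scope.

Section ChainRing.
Variable R : finComUnitRingType.

Definition is_ideal (I : {set R}) : Prop :=
  [/\ 0 \in I, (forall x y, x \in I -> y \in I -> x + y \in I)
    & (forall r x, x \in I -> r * x \in I)].

Definition gen_ideal (g : R) : {set R} := [set g * x | x : R].

Definition is_maximal_ideal (M : {set R}) : Prop :=
  [/\ is_ideal M, M != [set: R]
    & forall J, is_ideal J -> M \subset J -> J = M \/ J = [set: R]].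

Definition is_chain_ring : Prop :=
  forall I J, is_ideal I -> is_ideal J -> I \subset J \/ J \subset I.

Definition nilpotency_index (g : R) (s : nat) : Prop :=
  g ^+ s = 0 /\ forall i, (i < s)%N -> g ^+ i != 0.

(* T = [e_0; ...; e_(q-1)] is a complete set of coset representatives of R/<g>
   (so the residue field has q elements); the order e_0 < ... < e_(q-1)
   is the order of the list. *)
Definition coset_representatives (g : R) (q : nat) (T : seq R) : Prop :=
  size T = q /\
  forall x : R, exists! i : 'I_q, x - nth 0 T i \in gen_ideal g.

(* rho_j, the j-th element of R in the increasing order of the paper:
   the element whose gamma-adic digits (r_0,...,r_(s-1)) satisfy
   r_i = e_(d_i), where d_i is the i-th base-q digit of j. *)
Definition rho (g : R) (q s : nat) (T : seq R) (j : nat) : R :=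
  \sum_(i < s) nth 0 T ((j %/ q ^ i) %% q) * g ^+ i.

(* rows of G_k^alpha, following the recursive block definition; N = q^s *)
Fixpoint simplex_rows (f : nat -> R) (N k : nat) : seq (seq R) :=
  match k with
  | 0 => [::]
  | 1 => [:: [seq f j | j <- iota 0 N]]
  | k'.+1 =>
      flatten [seq nseq (N ^ k') (f j) | j <- iota 0 N]
        :: [seq flatten (nseq N r) | r <- simplex_rows f N k']
  end.

Definition simplex_matrix (g : R) (q s : nat) (T : seq R) (k : nat)
  : 'M[R]_(k, q ^ (s * k)) :=
  \matrix_(i < k, c < q ^ (s * k))
     nth 0 (nth [::] (simplex_rows (rho g q s T) (q ^ s) k) i) c.

Definition simplex_code (g : R) (q s : nat) (T : seq R) (k : nat)
  : {set 'rV[R]_(q ^ (s * k))} :=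
  [set v | [exists a : 'rV[R]_k, v == a *m simplex_matrix g q s T k]].

Section Codes.
Variable n : nat.

Definition hamming_dist (u v : 'rV[R]_n) : nat :=
  #|[set i : 'I_n | u 0 i != v 0 i]|.

(* minimum Hamming distance between distinct codewords (n if none) *)
Definition min_dist (C : {set 'rV[R]_n}) : nat :=
  \big[minn/n]_(u in C) \big[minn/n]_(v in C | v != u) hamming_dist u v.

(* C is contained in a free submodule of R^n of rank r, i.e. in the span of
   r R-linearly independent vectors (the rows of B) *)
Definition free_cover (C : {set 'rV[R]_n}) (r : nat) : bool :=
  [exists B : 'M[R]_(r, n),
     [forall a : 'rV[R]_r, (a *m B == 0) ==> (a == 0)] &&
     [forall v in C, [exists a : 'rV[R]_r, v == a *m B]]].

Lemma free_cover_ex (C : {set 'rV[R]_n}) : exists r, free_cover C r.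
Proof.
exists n; apply/existsP; exists 1%:M; apply/andP; split.
  by apply/forallP => a; rewrite mulmx1; apply/implyP.
by apply/forall_inP => v _; apply/existsP; exists v; rewrite mulmx1.
Qed.

Definition code_rank (C : {set 'rV[R]_n}) : nat := ex_minn (free_cover_ex C).

End Codes.
End ChainRing.

(* Main.v *)
Require Import Defs.
From HB Require Import structures.
From mathcomp Require Import all_boot all_order all_algebra.
Import GRing.Theory.

Lemma arith_sum q e r : (0 < q)%N -> (r <= e.+1)%N ->
  (\sum_(i < r) q ^ (e - i) * (q - 1) + q ^ (e.+1 - r) = q ^ e.+1)%N.
Proof.
move=> q0; elim: r => [|r IH] hr; first by rewrite big_ord0 subn0.
rewrite big_ord_recr /= -addnA subSS -mulnSr subn1 prednK // -expnSr -subSn //.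
by rewrite -subn1 IH // ltnW.
Qed.

Lemma arith_main q e r d : (2 <= q)%N -> (r <= e.+1)%N -> (d <= q ^ e * (q - 1))%N ->
  (\sum_(i < r) ((d + q ^ i - 1) %/ q ^ i) < q ^ e.+1)%N.
Proof.
move=> q2 hr hd.
have q0 : (0 < q)%N by apply: leq_trans q2.
apply: (@leq_trans (\sum_(i < r) q ^ (e - i) * (q - 1)).+1).
  rewrite ltnS; apply: leq_sum => i _.
  have hi : (i <= e)%N by rewrite -ltnS; apply: leq_trans hr.
  have qi : (0 < q ^ i)%N by rewrite expn_gt0 q0.
  apply: (@leq_trans ((q ^ e * (q - 1) + q ^ i - 1) %/ q ^ i)).
    by apply: leq_div2r; rewrite leq_sub2r // leq_add2r.
  rewrite -addnBA //.
  have -> : (q ^ e = q ^ (e - i) * q ^ i)%N by rewrite -expnD subnK.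
  rewrite mulnAC divnMDl // divn_small ?addn0 //.
  by rewrite subn1 ltn_predL.
by rewrite -(@arith_sum q e r q0 hr) -addn1 leq_add2l expn_gt0 q0.
Qed.

Local Open Scope ring_scope.

Lemma bigminn_seq_le (I : eqType) (r : seq I) (P : pred I) (F : I -> nat) x0 j :
  j \in r -> P j -> (\big[minn/x0]_(i <- r | P i) F i <= F j)%N.
Proof.
elim: r => // a r IH; rewrite inE big_cons; case/orP => [/eqP->|jr] Pj.
  by rewrite Pj geq_minl.
case: (P a); last exact: IH.
by rewrite geq_min IH ?orbT.
Qed.

Lemma bigminn_le (I : finType) (A : {set I}) (F : I -> nat) x0 j :
  j \in A -> (\big[minn/x0]_(i in A) F i <= F j)%N.
Proof. by move=> jA; apply: bigminn_seq_le => //; rewrite mem_index_enum. Qed.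

Section Flat.
Variable T : Type.
Variable x0 : T.

Lemma flat_blocks_size (f : nat -> T) m a N :
  size (flatten [seq nseq m (f j) | j <- iota a N]) = (N * m)%N.
Proof.
elim: N a => [|N IH] a //=; by rewrite size_cat size_nseq IH mulSn.
Qed.

Lemma flat_blocks_nth (f : nat -> T) m a N c : (c < N * m)%N ->
  nth x0 (flatten [seq nseq m (f j) | j <- iota a N]) c = f (a + c %/ m)%N.
Proof.
elim: N a c => [|N IH] a c //=; rewrite mulSn => hc.
rewrite nth_cat size_nseq; case: ltnP => hcm.
  by rewrite nth_nseq hcm divn_small // addn0.
rewrite IH; last by rewrite -(ltn_add2l m) subnKC.
have hm : (0 < m)%N.
  by case: m hc hcm {IH} => //; rewrite !muln0.
congr f; rewrite -{2}(subnK hcm).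
have -> : (c - m + m = c - m + 1 * m)%N by rewrite mul1n.
by rewrite divnDMl // addn1 addSnnS.
Qed.

Lemma flat_rep_size (r : seq T) N : size (flatten (nseq N r)) = (N * size r)%N.
Proof. by elim: N => //= N IH; rewrite size_cat IH mulSn. Qed.

Lemma flat_rep_nth (r : seq T) N c : (c < N * size r)%N ->
  nth x0 (flatten (nseq N r)) c = nth x0 r (c %% size r).
Proof.
elim: N c => [|N IH] c //=; rewrite mulSn => hc.
rewrite nth_cat; case: ltnP => hcm; first by rewrite modn_small.
rewrite IH; last by rewrite -(ltn_add2l (size r)) subnKC.
by rewrite -{2}(subnKC hcm) modnDl.
Qed.
End Flat.

Section Rows.
Variable R : finComUnitRingType.
Implicit Type f : nat -> R.

Lemma rows_size f N k : size (simplex_rows f N k) = k.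
Proof.
elim: k => [|[|k] IH] //=.
by rewrite size_map in IH *; rewrite IH.
Qed.

Lemma rows_row_size f N k r : r \in simplex_rows f N k -> size r = (N ^ k)%N.
Proof.
elim: k r => [|[|k] IH] r //=.
  by rewrite inE => /eqP->; rewrite size_map size_iota expn1.
rewrite inE => /orP[/eqP->|].
  by rewrite flat_blocks_size -expnS.
case/mapP => r' /IH hr' ->; by rewrite flat_rep_size hr' -expnS.
Qed.

Lemma rows_nth f N k i c : (0 < N)%N -> (i < k)%N -> (c < N ^ k)%N ->
  nth 0 (nth [::] (simplex_rows f N k) i) c = f ((c %/ N ^ (k.-1 - i)) %% N)%N.
Proof.
move=> N0; elim: k i c => [|[|k] IH] i c //.
  case: i => // _ /=; rewrite expn1 => hc.
  by rewrite (nth_map 0%N) ?size_iota // nth_iota // add0n divn1 modn_small.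
case: i => [|i] hi hc /=.
  rewrite flat_blocks_nth; last by rewrite -expnS.
  by rewrite add0n subn0 modn_small // ltn_divLR ?expn_gt0 ?N0 // -expnS.
rewrite ltnS in hi.
have hi' : (i < size (simplex_rows f N k.+1))%N by rewrite rows_size.
rewrite (nth_map [::] _ _ hi').
have hs := @rows_row_size f N k.+1 _ (mem_nth [::] hi').
rewrite flat_rep_nth; last by rewrite hs -expnS.
rewrite hs IH //; last by rewrite ltn_mod expn_gt0 N0.
rewrite subSS /=.
  have -> : (N ^ k.+1 = N ^ i.+1 * N ^ (k - i))%N.
    by rewrite -expnD addSn subnKC.
  by rewrite -modn_divl modn_dvdm // dvdn_exp.
Qed.
End Rows.

Section Main.
Variable R : finComUnitRingType.

Lemma rho0 (g : R) q s T : nth 0 T 0 = 0 -> rho g q s T 0 = 0.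
Proof. by move=> T0; rewrite /rho big1 // => i _; rewrite div0n mod0n T0 mul0r. Qed.

Lemma rho1 (g : R) q s T : (1 < q)%N -> (0 < s)%N -> nth 0 T 0 = 0 -> nth 0 T 1 = 1 ->
  rho g q s T 1 = 1.
Proof.
move=> q2 s0 T0 T1; case: s s0 => // s _.
rewrite /rho big_ord_recl /= expn0 divn1 (modn_small q2) T1 expr0 mulr1.
rewrite big1 ?addr0 // => i _.
rewrite divn_small ?mod0n ?T0 ?mul0r //.
by apply: leq_trans (q2) _; rewrite /bump /= add1n expnS leq_pmulr // expn_gt0 (ltnW q2).
Qed.

Lemma rho_gam (g : R) q s T j : (0 < s)%N -> g ^+ s = 0 ->
  g ^+ s.-1 * rho g q s T j = nth 0 T (j %% q)%N * g ^+ s.-1.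
Proof.
move=> s0 gs; case: s s0 gs => // s _ gs /=.
rewrite /rho mulr_sumr big_ord_recl /= expn0 divn1 expr0 mulr1 mulrC.
rewrite big1 ?addr0 // => i _.
by rewrite mulrCA -exprD /bump /= add1n addnS -addSn exprD gs mul0r mulr0.
Qed.

End Main.

Lemma offd (N a b : nat) : (1 < N)%N -> a != b -> ((N ^ a %/ N ^ b) %% N = 0)%N.
Proof.
move=> N1; case: (ltngtP a b) => // h _.
  by rewrite divn_small ?mod0n // ltn_exp2l.
rewrite -(subnK (ltnW h)) expnD mulnK ?expn_gt0 ?(ltnW N1) //.
by rewrite -(prednK (_ : 0 < a - b)%N) ?subn_gt0 // expnS modnMr.
Qed.

Theorem proposition3p28 (R : finComUnitRingType) (gamma : R) (s q : nat)
    (T : seq R) (k : nat) :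
  is_chain_ring R ->
  is_maximal_ideal (gen_ideal gamma) ->
  nilpotency_index gamma s ->
  coset_representatives gamma q T ->
  nth 0 T 0 = 0 -> nth 0 T 1 = 1 ->
  (1 <= k)%N ->
  let C := simplex_code gamma q s T k in
  (\sum_(i < code_rank C) ((min_dist C + q ^ i - 1) %/ q ^ i) < q ^ (s * k))%N.
Proof.
move=> _ _ [gs gnz] [sizeT _] T0 T1 k1 /=.
have s0 : (0 < s)%N.
  case: s gs gnz => // gs.
  by move: gs; rewrite expr0 => /eqP; rewrite oner_eq0.
have q2 : (1 < q)%N.
  rewrite ltnNge; apply/negP => hq.
  by move: T1; rewrite nth_default ?sizeT // => /eqP; rewrite eq_sym oner_eq0.
set N := (q ^ s)%N.
have N2 : (1 < N)%N.
  apply: leq_trans (q2) _.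
  by rewrite /N -(prednK s0) expnS leq_pmulr // expn_gt0 (ltnW q2).
have nN : (q ^ (s * k) = N ^ k)%N by rewrite expnM.
set C := simplex_code gamma q s T k.
set G := simplex_matrix gamma q s T k.
have GE : forall (i : 'I_k) (c : 'I_(q ^ (s * k))),
    G i c = rho gamma q s T ((c %/ N ^ (k.-1 - i)) %% N)%N.
  by move=> i c; rewrite /G /simplex_matrix mxE rows_nth // ?(ltnW N2) // -nN.
have Cin : forall v, (v \in C) = [exists a, v == a *m G].
  by move=> v; rewrite inE.
have Hfree : free_cover C k.
  apply/existsP; exists G; apply/andP; split; last first.
    by apply/forall_inP => v; rewrite Cin.
  apply/forallP => a; apply/implyP => /eqP aG0; apply/eqP/rowP => j.
  have hcj : (N ^ (k.-1 - j) < q ^ (s * k))%N.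
    rewrite nN ltn_exp2l //; apply: leq_ltn_trans (leq_subr _ _) _.
    by rewrite ltn_predL.
  have := congr1 (fun M : 'rV_ _ => M 0 (Ordinal hcj)) aG0.
  rewrite !mxE (bigD1 j) //= big1 ?addr0.
    by rewrite GE /= divnn expn_gt0 (ltnW N2) /= (modn_small N2) rho1 // mulr1.
  move=> l hl; rewrite GE /= offd ?rho0 ?mulr0 //.
  apply/negP => /eqP e.
  have jk : (j <= k.-1)%N by rewrite -ltnS prednK.
  have lk : (l <= k.-1)%N by rewrite -ltnS prednK.
  move: hl; rewrite -(inj_eq val_inj) /=.
  by rewrite -(subKn jk) e subKn // eqxx.
have hi0 : (k.-1 < k)%N by rewrite ltn_predL.
pose i0 : 'I_k := Ordinal hi0.
pose v := gamma ^+ s.-1 *: (delta_mx (0 : 'I_1) i0 *m G).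
have v0c : forall c, v 0 c = nth 0 T (c %% q)%N * gamma ^+ s.-1.
  move=> c; rewrite /v mxE -rowE mxE GE /= subnn expn0 divn1 rho_gam //.
  by rewrite modn_dvdm // /N -(prednK s0) expnS dvdn_mulr.
have vC : v \in C.
  rewrite Cin; apply/existsP; exists (gamma ^+ s.-1 *: delta_mx (0 : 'I_1) i0).
  by rewrite /v -?scalemxAl.
have zC : (0 : 'rV_ _) \in C.
  by rewrite Cin; apply/existsP; exists 0; rewrite mul0mx.
have h1 : (1 < q ^ (s * k))%N.
  rewrite nN; apply: leq_trans (N2) _.
  by rewrite -(prednK k1) expnS leq_pmulr // expn_gt0 (ltnW N2).
have vn0 : v != 0.
  apply/eqP => h; have := congr1 (fun M : 'rV_ _ => M 0 (Ordinal h1)) h.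
  rewrite v0c mxE /= (modn_small q2) T1 mul1r => /eqP.
  by rewrite (negbTE (gnz _ _)) // prednK.
have md : (min_dist C <= hamming_dist v 0)%N.
  rewrite /min_dist; apply: leq_trans (bigminn_le _ _ _ _ _ vC) _.
  apply: (@bigminn_seq_le _ _ (fun w => (w \in C) && (w != v))).
    by rewrite mem_index_enum.
  by rewrite zC eq_sym vn0.
have skp : (0 < s * k)%N by rewrite muln_gt0 s0 k1.
set e := (s * k).-1.
have ske : (s * k = e.+1)%N by rewrite prednK.
set m := (q ^ e)%N.
have nm : (q ^ (s * k) = m * q)%N by rewrite /m -expnSr ske.
have hw : (hamming_dist v 0 <= q ^ (s * k) - m)%N.
  set D := [set c : 'I_(q ^ (s * k)) | (q %| c)%N].
  have sub : [set i | v 0 i != (0 : 'rV_ _) 0 i] \subset ~: D.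
    apply/subsetP => c; rewrite !inE; apply: contra => hd.
    by rewrite v0c mxE (eqP hd) T0 mul0r.
  have Dm : (m <= #|D|)%N.
    have hj : forall j : 'I_m, (j * q < q ^ (s * k))%N.
      by move=> j; rewrite nm ltn_mul2r ltn_ord andbT ltnW.
    pose h := fun j : 'I_m => Ordinal (hj j).
    have inj : injective h.
      move=> a b /(congr1 val) /= /eqP; rewrite eqn_mul2r => /orP [/eqP q0|/eqP ab].
        by move: q2; rewrite q0.
      exact: val_inj.
    have sD : [set h x | x : 'I_m] \subset D.
      by apply/subsetP => c /imsetP [j _ ->]; rewrite inE /= dvdn_mull.
    by apply: leq_trans (subset_leq_card sD); rewrite card_imset // card_ord.
  rewrite /hamming_dist; apply: leq_trans (subset_leq_card sub) _.
  by rewrite cardsCs setCK card_ord leq_sub2l.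
have hd : (min_dist C <= q ^ e * (q - 1))%N.
  by apply: leq_trans md (leq_trans hw _); rewrite nm mulnBr muln1.
rewrite /code_rank; case: ex_minnP => r _ hmin.
have hr : (r <= e.+1)%N.
  by apply: leq_trans (hmin k Hfree) _; rewrite -ske leq_pmull.
by apply: leq_trans (@arith_main q e r _ q2 hr hd) _; rewrite ske.
Qed.
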